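(* If $m,n\in\mathbb{Z}$ with $\gcd(m,n)=1$ (and $mn(m+n)\ne0$), then $A(m,n)=7^a(14b+1)$ for some integers $a,b\ge 0$, and every prime factor of $14b+1$ is congruent to $1 \pmod 7$. Moreover, for every prime $p\equiv 1\pmod 7$ there are infinitely many values $c=-\frac{A(m,n)}{B(m,n)}$ (with $\gcd(m,n)=1$, $mn(m+n)\neq0$) such that $p\mid A(m,n)$; for each of these $f_c(x)=x^2+c$ has a rational $3$-cycle.
   Context: $A(m,n)=m^6+2m^5n+4m^4n^2+8m^3n^3+9m^2n^4+4mn^5+n^6$, $B(m,n)=4m^2n^2(m+n)^2$. Standing fact: $f_c(x)=x^2+c$ ($c\in\mathbb{Q}$) has a rational $3$-cycle (orbit of a rational point of minimal period 3) if and only if $c=-A(m,n)/B(m,n)$ for some coprime integers $m,n$ with $mn(m+n)\neq 0$, and this fraction is then in lowest terms. *)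

(* Defs.v *)
From mathcomp Require Import all_boot all_order all_algebra.
Set Implicit Arguments. Unset Strict Implicit. Unset Printing Implicit Defensive.
Import Order.TTheory GRing.Theory Num.Theory.
Local Open Scope ring_scope.

Definition A (m n : int) : int :=
  m ^+ 6 + 2 * m ^+ 5 * n + 4 * m ^+ 4 * n ^+ 2 + 8 * m ^+ 3 * n ^+ 3
  + 9 * m ^+ 2 * n ^+ 4 + 4 * m * n ^+ 5 + n ^+ 6.

Definition B (m n : int) : int := 4 * m ^+ 2 * n ^+ 2 * (m + n) ^+ 2.

Definition fc (c : rat) (x : rat) : rat := x ^+ 2 + c.

Definition has_rat_3cycle (c : rat) : Prop :=
  exists x : rat, iter 3 (fc c) x = x /\ iter 1 (fc c) x <> x /\ iter 2 (fc c) x <> x.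

(* Main.v *)
Require Import Defs.
From mathcomp Require Import all_boot all_order all_algebra.
From mathcomp Require Import all_fingroup all_solvable all_field.
From mathcomp Require Import ring lra zify.
Set Implicit Arguments. Unset Strict Implicit.
Import Order.TTheory GRing.Theory Num.Theory.
Local Open Scope ring_scope.
Definition Ag (R : comNzRingType) (m n : R) : R :=
  m ^+ 6 + 2 * m ^+ 5 * n + 4 * m ^+ 4 * n ^+ 2 + 8 * m ^+ 3 * n ^+ 3
  + 9 * m ^+ 2 * n ^+ 4 + 4 * m * n ^+ 5 + n ^+ 6.

Lemma Ag_intr (R : comNzRingType) (m n : int) :
  (Ag m n)%:~R = Ag (m%:~R : R) n%:~R.
Proof. by rewrite /Ag !(rmorphD, rmorphM, rmorphXn). Qed.

Lemma F2_nonroot (t : 'F_2) : Ag t 1 != 0.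
Proof.
have ht : t ^+ 2 = t by have := expf_card t; rewrite card_Fp.
have h28 : (28 : 'F_2) = 0.
  have -> : (28 : 'F_2) = 2%:R * 14%:R by rewrite -natrM.
  by rewrite pchar_Fp_0 ?mul0r.
have -> : Ag t 1 = 1 + 28 * t + (t ^+ 2 - t) * (24 + 15 * t + 7 * t ^+ 2 + 3 * t ^+ 3 + t ^+ 4).
  rewrite /Ag; ring.
by rewrite ht subrr mul0r addr0 h28 mul0r addr0 oner_eq0.
Qed.

Lemma unit_order7 (q : nat) (z : 'F_q) : prime q -> z ^+ 7 = 1 -> z != 1 -> (q %% 7 = 1)%N.
Proof.
move=> pq z7 z1.
have [k pk kd] := prim_order_exists (isT : (0 < 7)%N) z7.
have k7 : k = 7%N.
  have := kd; rewrite dvdn_divisors // => /=.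
  rewrite !inE => /orP[/eqP k1|/eqP //].
  subst k; move: (prim_order_dvd pk 1); rewrite dvdnn expr1 => /esym/eqP.
  by move/eqP: z1.
subst k.
have z0 : z != 0 by apply/eqP => h; move: z7; rewrite h expr0n /= => /eqP; rewrite eq_sym oner_eq0.
have zq : z ^+ q.-1 = 1.
  have e : z ^+ q = z by have := expf_card z; rewrite card_Fp.
  have q0 : (0 < q)%N by apply: prime_gt0.
  apply: (mulIf z0); rewrite mul1r -exprSr prednK //.
have := prim_order_dvd pk q.-1; rewrite zq eqxx => /dvdnP[c hc].
have q1 := prime_gt1 pq.
lia.
Qed.
Definition Phi7 (R : comNzRingType) (z : R) : R :=
  1 + z + z ^+ 2 + z ^+ 3 + z ^+ 4 + z ^+ 5 + z ^+ 6.
Definition Uf (R : comNzRingType) (t : R) : R :=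
  - (3 + 4 * t + 3 * t ^+ 2 + t ^+ 3 + t ^+ 4).
Definition Qf (R : comNzRingType) (t : R) : R :=
  463 + 1860 * t + 4537 * t ^+ 2 + 7976 * t ^+ 3 + 11158 * t ^+ 4 + 13108 * t ^+ 5
  + 13268 * t ^+ 6 + 11772 * t ^+ 7 + 9259 * t ^+ 8 + 6496 * t ^+ 9 + 4089 * t ^+ 10
  + 2296 * t ^+ 11 + 1159 * t ^+ 12 + 516 * t ^+ 13 + 205 * t ^+ 14 + 68 * t ^+ 15
  + 21 * t ^+ 16 + 4 * t ^+ 17 + t ^+ 18.

Lemma ident1 (R : comNzRingType) (t : R) :
  let u := Uf t in
  u ^+ 6 + 2 * u ^+ 5 + 4 * u ^+ 4 + 8 * u ^+ 3 + 16 * u ^+ 2 + 32 * u + 64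
  = Ag t 1 * Qf t.
Proof. rewrite /Ag /Qf /Uf /=. ring. Qed.

Lemma field_root7 (F : fieldType) (t : F) : (2 : F) != 0 -> Ag t 1 = 0 ->
  let z := Uf t / 2 in z ^+ 7 = 1 /\ (z = 1 -> (7 : F) = 0).
Proof.
move=> h2 hA z.
have hP : Phi7 z = 0.
  have e : 64 * Phi7 z = Ag t 1 * Qf t.
    rewrite -ident1 /Phi7 /z; field; done.
  move: e; rewrite hA mul0r => /eqP; rewrite mulf_eq0 => /orP[|/eqP //].
  have -> : (64 : F) = 2 ^+ 6 by rewrite -natrX.
  by rewrite expf_eq0 (negbTE h2) andbF.
split.
  apply/eqP; rewrite -subr_eq0.
  have -> : z ^+ 7 - 1 = (z - 1) * Phi7 z by rewrite /Phi7; ring.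
  by rewrite hP mulr0.
move=> z1; move: hP; rewrite /Phi7 z1 !expr1n => <-.
ring.
Qed.

Lemma prime_div_A (q : nat) (m n : int) : prime q -> coprimez m n ->
  (q %| Ag m n)%Z -> q != 2%N /\ (q = 7%N \/ (q %% 7 = 1)%N).
Proof.
move=> pq cmn hq.
have chq := pchar_Fp pq.
move: hq; rewrite (dvdz_pcharf chq) Ag_intr.
set M : 'F_q := m%:~R; set N : 'F_q := n%:~R => /eqP hA.
have N0 : N != 0.
  apply/negP => /eqP N0; move: hA; rewrite N0.
  have -> : Ag M 0 = M ^+ 6 by rewrite /Ag; ring.
  move/eqP; rewrite expf_eq0 /= => /eqP M0.
  have qm : (q %| m)%Z by rewrite (dvdz_pcharf chq) -/M M0.
  have qn : (q %| n)%Z by rewrite (dvdz_pcharf chq) -/N N0.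
  move: cmn; rewrite /coprimez => /eqP g1.
  have : (q %| gcdz m n)%Z by rewrite dvdz_gcd qm qn.
  by rewrite g1 dvdzE /= dvdn1 => /eqP q1; move: pq; rewrite q1.
have hA1 : Ag (M / N) 1 = 0.
  have : Ag M N = N ^+ 6 * Ag (M / N) 1 by rewrite /Ag; field.
  by rewrite hA => /esym/eqP; rewrite mulf_eq0 expf_eq0 (negbTE N0) andbF => /eqP.
have q2 : q != 2%N.
  apply/eqP => q2; subst q.
  by move: (F2_nonroot (M / N)); rewrite hA1 eqxx.
split => //.
have qn1 : q != 1%N by rewrite neq_ltn prime_gt1 ?orbT.
have h2 : (2 : 'F_q) != 0.
  rewrite -(dvdn_pcharf chq 2); apply/negP => /(prime_nt_dvdP (isT : prime 2) qn1) h.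
  by move/eqP: q2.
have [z7 z1] := field_root7 h2 hA1.
have [e|ne] := eqVneq (Uf (M / N) / 2) 1.
  left; have := z1 e; move/eqP; rewrite -(dvdn_pcharf chq 7).
  by move/(prime_nt_dvdP (isT : prime 7) qn1).
by right; apply: unit_order7 pq z7 ne.
Qed.

Lemma mod7_prod (r : nat) : (0 < r)%N ->
  (forall q : nat, prime q -> (q %| r)%N -> (q %% 7 = 1)%N) -> (r %% 7 = 1)%N.
Proof.
elim/ltn_ind: r => r IH r0 hr.
have [r1|r1] := leqP r 1.
  by have -> : r = 1%N by lia.
have pq := pdiv_prime r1.
have dq := pdiv_dvd r.
set q := pdiv r in pq dq *.
have q1 := prime_gt1 pq.
have rq : r = (q * (r %/ q))%N by rewrite mulnC divnK.
have s0 : (0 < r %/ q)%N by rewrite divn_gt0 ?(prime_gt0 pq) // dvdn_leq.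
have slt : (r %/ q < r)%N by rewrite ltn_Pdiv.
have hs := IH _ slt s0 (fun p pp pd => hr p pp (dvdn_trans pd (dvdn_div dq))).
rewrite rq -modnMm hs (hr q pq dq).
by [].
Qed.

Lemma A_Ag (m n : int) : A m n = Ag m n.
Proof. by []. Qed.

Lemma A_ge0 (m n : int) : 0 <= A m n.
Proof.
have h : 1680 * A m n = 105 * (4 * m ^+ 3 + 4 * m ^+ 2 * n + m * n ^+ 2) ^+ 2
    + 42 * (10 * m ^+ 2 * n + 15 * m * n ^+ 2 + 4 * n ^+ 3) ^+ 2
    + 5 * (21 * m * n ^+ 2 + 8 * n ^+ 3) ^+ 2 + 688 * n ^+ 6.
  rewrite /A; ring.
have : 0 <= 1680 * A m n.
  rewrite h; have e6 : n ^+ 6 = (n ^+ 3) ^+ 2 by rewrite -exprM.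
  rewrite e6; apply: addr_ge0; [apply: addr_ge0; [apply: addr_ge0|]|];
    apply: mulr_ge0 => //; apply: sqr_ge0.
by rewrite pmulr_rge0.
Qed.

Lemma part1 (m n : int) : coprimez m n -> m * n * (m + n) != 0 ->
     exists a b : nat,
       A m n = ((7 ^ a * (14 * b + 1))%N)%:Z /\
       (forall q : nat, prime q -> (q %| 14 * b + 1)%N -> (q %% 7 = 1)%N).
Proof.
move=> cmn _.
set N := `|A m n|%N.
have AN : A m n = N%:Z by rewrite /N gez0_abs // A_ge0.
have hdiv : forall q, prime q -> (q %| N)%N -> q != 2%N /\ (q = 7%N \/ (q %% 7 = 1)%N).
  move=> q pq qN; apply: prime_div_A pq cmn _.
  by rewrite -A_Ag AN dvdzE.
have N2 : ~~ (2 %| N)%N.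
  by apply/negP => /(hdiv 2 isT) [].
have N0 : (0 < N)%N by rewrite lt0n; apply: contraNneq N2 => ->.
set a := logn 7 N.
set r := (N %/ 7 ^ a)%N.
have Nr : N = (7 ^ a * r)%N by rewrite /r mulnC divnK // pfactor_dvdnn.
have r0 : (0 < r)%N by move: N0; rewrite Nr muln_gt0 => /andP[].
have r7 : ~~ (7 %| r)%N.
  apply/negP => h7.
  have : (7 ^ a.+1 %| N)%N by rewrite Nr expnSr dvdn_pmul2l // expn_gt0.
  by rewrite pfactor_dvdn // ltnn.
have hr : forall q, prime q -> (q %| r)%N -> (q %% 7 = 1)%N.
  move=> q pq qr.
  have qN : (q %| N)%N by rewrite Nr dvdn_mull.
  have [_ [q7|//]] := hdiv q pq qN.
  by move: r7; rewrite -q7 qr.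
have r71 := mod7_prod r0 hr.
have r2 : ~~ (2 %| r)%N by apply: contra N2 => h; rewrite Nr dvdn_mull.
have rb : r = (14 * (r %/ 14) + 1)%N by lia.
exists a, (r %/ 14)%N; split.
  by rewrite AN Nr -rb.
by rewrite -rb.
Qed.

Lemma cycle3 (t : rat) : t != 0 -> t + 1 != 0 ->
  has_rat_3cycle (- (Ag t 1 / (4 * t ^+ 2 * (t + 1) ^+ 2))).
Proof.
move=> t0 t1.
set c := - _.
set x1 := (t ^+ 3 + 2 * t ^+ 2 + t + 1) / (2 * t * (t + 1)).
set x2 := (t ^+ 3 - t - 1) / (2 * t * (t + 1)).
set x3 := - (t ^+ 3 + 2 * t ^+ 2 + 3 * t + 1) / (2 * t * (t + 1)).
have f1 : fc c x1 = x2 by rewrite /fc /c /x1 /x2 /Ag; field; rewrite t0 t1.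
have f2 : fc c x2 = x3 by rewrite /fc /c /x3 /x2 /Ag; field; rewrite t0 t1.
have f3 : fc c x3 = x1 by rewrite /fc /c /x3 /x1 /Ag; field; rewrite t0 t1.
have pos : 0 < t ^+ 2 + t + 1 by nra.
exists x1; split; [|split] => /=.
- by rewrite f1 f2 f3.
- rewrite f1; apply/eqP; rewrite -subr_eq0.
  have -> : x2 - x1 = - ((t ^+ 2 + t + 1) / (t * (t + 1))).
    by rewrite /x1 /x2; field; rewrite t0 t1.
  by rewrite oppr_eq0 mulf_neq0 ?invr_eq0 ?mulf_neq0 // gt_eqF.
- rewrite f1 f2; apply/eqP; rewrite -subr_eq0.
  have -> : x3 - x1 = - (t ^+ 2 + t + 1) / t.
    by rewrite /x1 /x3; field; rewrite t0 t1.
  by rewrite mulf_neq0 ?invr_eq0 // oppr_eq0 gt_eqF.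
Qed.

Lemma exists_root7 (p : nat) : prime p -> (p %% 7 = 1)%N ->
  exists z : 'F_p, Phi7 z = 0.
Proof.
move=> pp p7.
have hc : (7 %| #|[set: {unit 'F_p}]%G|)%N.
  rewrite card_finField_unit card_Fp //.
  have := prime_gt1 pp; lia.
have [u _ ou] := Cauchy (isT : prime 7) hc.
set z := FinRing.uval u.
have z7 : z ^+ 7 = 1.
  by rewrite /z -FinRing.val_unitX -ou expg_order.
have z1 : z != 1.
  apply/eqP => e.
  have u1 : u = 1%g by apply: val_inj; rewrite /= -/z e.
  by move: ou; rewrite u1 order1.
exists z.
have : (z - 1) * Phi7 z = 0.
  have -> : (z - 1) * Phi7 z = z ^+ 7 - 1 by rewrite /Phi7; ring.
  by rewrite z7 subrr.
by move/eqP; rewrite mulf_eq0 subr_eq0 (negbTE z1) => /eqP.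
Qed.

Lemma bound_seq (s : seq rat) : exists K : nat, forall c, c \in s -> - c < K%:R.
Proof.
elim: s => [|x s [K hK]]; first by exists 0%N.
exists (K + Num.Def.archi_bound `|x|)%N => c; rewrite inE => /orP[/eqP->|cs].
- have h1 := archi_boundP (normr_ge0 x).
  have h2 := ler_norm (- x); rewrite normrN in h2.
  have h3 : (0 : rat) <= K%:R by rewrite ler0n.
  rewrite natrD; lra.
- have h1 := hK c cs.
  have h3 : (0 : rat) <= (Num.Def.archi_bound `|x|)%:R by rewrite ler0n.
  rewrite natrD; lra.
Qed.

Lemma big_ineq (T : rat) (K : nat) : 16 * (K%:R + 1) <= T ->
  K%:R * (4 * T ^+ 2 * (T + 1) ^+ 2) < Ag T 1.
Proof.
move=> hT.
set Kr : rat := K%:R.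
have K0 : 0 <= Kr by rewrite ler0n.
have T1 : 1 <= T by lra.
have T0 : 0 < T by lra.
have h1 : (T + 1) ^+ 2 <= 4 * T ^+ 2 by nra.
have h2 : 4 * T ^+ 2 * (T + 1) ^+ 2 <= 4 * T ^+ 2 * (4 * T ^+ 2).
  by apply: ler_wpM2l => //; rewrite mulr_ge0 // exprn_ge0 // ltW.
have h3 : Kr * (4 * T ^+ 2 * (T + 1) ^+ 2) <= Kr * (4 * T ^+ 2 * (4 * T ^+ 2)).
  by apply: ler_wpM2l.
have h4 : Kr * 16 <= T ^+ 2 by nra.
have h5 : Kr * 16 * T ^+ 4 <= T ^+ 2 * T ^+ 4.
  by apply: ler_wpM2r => //; rewrite exprn_ge0 // ltW.
have e1 : Kr * (4 * T ^+ 2 * (4 * T ^+ 2)) = Kr * 16 * T ^+ 4 by ring.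
have e2 : T ^+ 2 * T ^+ 4 = T ^+ 6 by rewrite -exprD.
have p1 : 0 < T ^+ 2 by rewrite exprn_gt0.
have p2 : 0 < T ^+ 3 by rewrite exprn_gt0.
have p3 : 0 < T ^+ 4 by rewrite exprn_gt0.
have p4 : 0 < T ^+ 5 by rewrite exprn_gt0.
have h6 : T ^+ 6 < Ag T 1.
  rewrite /Ag !expr1n !mulr1; lra.
lra.
Qed.

Lemma ident2 (R : comNzRingType) (z : R) :
  Ag (z + z ^+ 2) 1 = Phi7 z * (1 + 3 * z + 9 * z ^+ 2 + 13 * z ^+ 3 + 11 * z ^+ 4 + 5 * z ^+ 5 + z ^+ 6).
Proof. rewrite /Ag /Phi7. ring. Qed.

Lemma part2 (p : nat) : prime p -> (p %% 7 = 1)%N ->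
     forall s : seq rat, exists c : rat, c \notin s /\
       (exists m n : int, [/\ coprimez m n, m * n * (m + n) != 0,
            (p%:Z %| A m n)%Z & c = - ((A m n)%:~R / (B m n)%:~R)]) /\
       has_rat_3cycle c.
Proof.
move=> pp p7 s.
have [z hz] := exists_root7 pp p7.
have [K hK] := bound_seq s.
set k : nat := (z : nat).
set mn : nat := (k + k ^ 2 + p * (16 * (K + 1)))%N.
set m : int := mn%:Z.
have p1 := prime_gt1 pp.
have mge : (16 * (K + 1) <= mn)%N.
  rewrite /mn; have : (1 <= p)%N by lia. nia.
have hmF : (m%:~R : 'F_p) = z + z ^+ 2.
  rewrite /m; change (mn%:R = z + z ^+ 2 :> 'F_p).
  rewrite /mn !natrD natrM pchar_Fp_0 // mul0r addr0 natrX.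
  by rewrite /k natr_Zp.
have pA : (p%:Z %| A m 1)%Z.
  rewrite (dvdz_pcharf (pchar_Fp pp)) A_Ag Ag_intr rmorph1 hmF ident2 hz mul0r.
  by [].
set T : rat := m%:~R.
have hT : 16 * (K%:R + 1) <= T.
  rewrite /T /m; change (16 * (K%:R + 1) <= mn%:R :> rat).
  have : ((16 * (K + 1))%:R : rat) <= mn%:R by rewrite ler_nat.
  by rewrite natrM natrD.
have K0 : (0 : rat) <= K%:R by rewrite ler0n.
have T0 : T != 0 by apply: lt0r_neq0; lra.
have T1 : T + 1 != 0 by apply: lt0r_neq0; lra.
have hAq : (A m 1)%:~R = Ag T 1 :> rat by rewrite A_Ag Ag_intr rmorph1.
have hBq : (B m 1)%:~R = 4 * T ^+ 2 * (T + 1) ^+ 2 :> rat.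
  by rewrite /B /T !(rmorphM, rmorphXn, rmorphD, rmorph1) !expr1n !mulr1.
exists (- (Ag T 1 / (4 * T ^+ 2 * (T + 1) ^+ 2))); split; [|split].
- apply/negP => hc; have := hK _ hc; rewrite opprK.
  have den : 0 < 4 * T ^+ 2 * (T + 1) ^+ 2.
    have a : 0 < T by lra.
    have b : 0 < T + 1 by lra.
    by rewrite !mulr_gt0 // exprn_gt0.
  rewrite ltr_pdivrMr // => h.
  have := big_ineq hT; lra.
- exists m, 1; split => //.
  + by rewrite /coprimez gcdz1.
  + have m0 : (0 < m)%R by rewrite /m ltz_nat; lia.
    rewrite mulr1 mulf_neq0 // ?gt_eqF //.
    by apply: ltr_wpDr.
  + by rewrite hAq hBq.
- by apply: cycle3.
Qed.

Theorem theorem3 :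
  (forall m n : int, coprimez m n -> m * n * (m + n) != 0 ->
     exists a b : nat,
       A m n = ((7 ^ a * (14 * b + 1))%N)%:Z /\
       (forall q : nat, prime q -> (q %| 14 * b + 1)%N -> (q %% 7 = 1)%N)) /\
  (forall p : nat, prime p -> (p %% 7 = 1)%N ->
     forall s : seq rat, exists c : rat, c \notin s /\
       (exists m n : int, [/\ coprimez m n, m * n * (m + n) != 0,
            (p%:Z %| A m n)%Z & c = - ((A m n)%:~R / (B m n)%:~R)]) /\
       has_rat_3cycle c).
Proof. split; [exact: part1 | exact: part2]. Qed.
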